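(* Let $k$ be a difference field of characteristic $0$, $R=k\{y_1,\ldots,y_n\}$, $I$ a radical well-mixed monomial $\sigma$-ideal, and $\mathbf{a}\in(\mathbb{N}\cup\{-1\})^n$ with $\mathbf{a}\geqslant\mathbf{c}$ for every character vector $\mathbf{c}$ of $I$. If $\mathbf{b}\in(\mathbb{N}\cup\{-1\})^n$ with $\mathbf{b}\leqslant\mathbf{a}$, then $\mathbf{y}^{x^{\mathbf{b}}}\notin I$ if and only if $\mathbf{y}^{x^{\mathbf{a}-\mathbf{b}}}\in I^{[\mathbf{a}]}$.
   Context: A difference field is a field $k$ with a ring endomorphism $\sigma$; $R=k\{y_1,\ldots,y_n\}$ is the polynomial ring over $k$ in the variables $\sigma^j(y_i)$, with $\sigma$ extended naturally. For $p=\sum_ic_ix^i\in\mathbb{N}[x]$ and $a\in R$, $a^p=\prod_i(\sigma^i(a))^{c_i}$; $\mathbf{y}^{\mathbf{u}}=y_1^{u_1}\cdots y_n^{u_n}$. For an integer vector $\mathbf{b}$ with entries $\ge-1$, $x^{\mathbf{b}}=(x^{b_1},\ldots,x^{b_n})$ with $x^{-1}=0$; $\mathbf{a}-\mathbf{b}$ is coordinatewise subtraction. A $\sigma$-ideal is an ideal stable under $\sigma$; monomial if generated by monomials; well-mixed if $ab\in I\Rightarrow a\sigma(b)\in I$. $\langle F\rangle_r$ is the smallest radical well-mixed $\sigma$-ideal containing $F$. For $\mathbf{b}\in(\mathbb{N}\cup\{-1\})^n$, $\mathfrak{m}^{\mathbf{b}}$ is the $\sigma$-ideal generated by $\{y_i^{x^{b_i}}:b_i\ne-1\}$.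 Vectors are compared componentwise. The character vectors of $I$ are the finitely many vectors $\mathbf{a}_1,\ldots,\mathbf{a}_m\in(\mathbb{N}\cup\{-1\})^n$ forming a minimal set with $I=\langle\mathbf{y}^{x^{\mathbf{a}_1}},\ldots,\mathbf{y}^{x^{\mathbf{a}_m}}\rangle_r$ (equivalently, the componentwise-minimal $\mathbf{a}$ with $\mathbf{y}^{x^{\mathbf{a}}}\in I$). For $\mathbf{b}\leqslant\mathbf{a}$, $\mathbf{a}\backslash\mathbf{b}$ has $i$-th coordinate $a_i+1-b_i$ if $b_i\ge0$ and $-1$ if $b_i=-1$. The Alexander dual is $I^{[\mathbf{a}]}=\bigcap\{\mathfrak{m}^{\mathbf{a}\backslash\mathbf{c}}:\mathbf{c}\text{ a character vector of }I\}$. *)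

(* Defs.v *)
From HB Require Import structures.
From mathcomp Require Import all_boot all_algebra.
From mathcomp Require Import finmap.
From mathcomp.multinomials Require Import monalg.

Set Implicit Arguments.
Unset Strict Implicit.
Unset Printing Implicit Defensive.

Import GRing.Theory.
Local Open Scope ring_scope.

Section DiffPoly.
Variables (k : fieldType) (sigma : {rmorphism k -> k}) (n : nat).

(* Variables sigma^j(y_i) are indexed by v = (i, j). *)
Definition var := ('I_n * nat)%type.

Definition dpoly := {malg k[{cmonom var}]}.

Definition yvar (i : 'I_n) : dpoly := << ucm ((i, 0%N) : var) >>.

(* shift of a monomial: every variable (i, j) is replaced by (i, j+1) *)
Definition shiftm (m : {cmonom var}) : {cmonom var} :=
  [cmonom m ((v.1, v.2.-1) : var) |
     v in [fset ((w.1, w.2.+1) : var) | w in finsupp m]%fset]%M.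

Definition sigmaR (p : dpoly) : dpoly :=
  mmap (fun c : k => (sigma c)%:MP) (fun m => << shiftm m >>) p.

Definition is_ideal (I : dpoly -> Prop) : Prop :=
  [/\ I 0, (forall a b, I a -> I b -> I (a + b))
    & (forall r a, I a -> I (r * a))].

Definition sigma_stable (I : dpoly -> Prop) : Prop :=
  forall a, I a -> I (sigmaR a).

Definition is_sigma_ideal (I : dpoly -> Prop) : Prop :=
  is_ideal I /\ sigma_stable I.

Definition is_radical (I : dpoly -> Prop) : Prop :=
  forall a e, I (a ^+ e.+1) -> I a.

Definition is_well_mixed (I : dpoly -> Prop) : Prop :=
  forall a b, I (a * b) -> I (a * sigmaR b).

Definition ideal_gen (F : dpoly -> Prop) (x : dpoly) : Prop :=
  forall J, is_ideal J -> (forall f, F f -> J f) -> J x.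

Definition sigma_ideal_gen (F : dpoly -> Prop) (x : dpoly) : Prop :=
  forall J, is_sigma_ideal J -> (forall f, F f -> J f) -> J x.

Definition is_monomial_ideal (I : dpoly -> Prop) : Prop :=
  exists M : {cmonom var} -> Prop,
    forall x, I x <-> ideal_gen (fun f => exists2 m, M m & f = << m >>) x.

Definition nvec := 'I_n -> int.
Definition valid_vec (a : nvec) : Prop := forall i, (-1 <= a i)%R.
Definition vle (a b : nvec) : Prop := forall i, (a i <= b i)%R.

(* y^{x^b} = prod_i (sigma^{b_i} (y_i)), with y_i^{x^{-1}} = y_i^0 = 1 *)
Definition ypow (b : nvec) : dpoly :=
  \prod_(i < n | (0 <= b i)%R) iter `|b i|%N sigmaR (yvar i).

Definition mideal (b : nvec) : dpoly -> Prop :=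
  sigma_ideal_gen (fun f => exists2 i : 'I_n, b i != -1 &
                               f = iter `|b i|%N sigmaR (yvar i)).

Definition is_char_vec (I : dpoly -> Prop) (c : nvec) : Prop :=
  [/\ valid_vec c, I (ypow c) &
      forall c', valid_vec c' -> vle c' c -> I (ypow c') -> c' = c].

Definition vbslash (a b : nvec) : nvec :=
  fun i => if (0 <= b i)%R then a i + 1 - b i else -1.

Definition vsub (a b : nvec) : nvec := fun i => a i - b i.

Definition alexander_dual (I : dpoly -> Prop) (a : nvec) (x : dpoly) : Prop :=
  forall c, is_char_vec I c -> mideal (vbslash a c) x.

End DiffPoly.

(* Main.v *)
Require Import Defs.
From HB Require Import structures.
From mathcomp Require Import all_boot all_algebra.
From mathcomp Require Import finmap.
From mathcomp.multinomials Require Import monalg.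
From mathcomp Require Import zify.
From Stdlib Require Import Classical FunctionalExtensionality.
Import GRing.Theory.
Local Open Scope ring_scope.
Set Implicit Arguments.
Unset Strict Implicit.

Section S.
Variables (k : fieldType) (sigma : {rmorphism k -> k}) (n : nat).
Local Notation dpoly := (dpoly k n).
Local Notation var := (var n).
Local Notation sR := (@sigmaR k sigma n).

Lemma shiftmE (m : {cmonom var}) (v : var) :
  shiftm m v = if v.2 is j.+1 then m (v.1, j) else 0%N.
Proof.
rewrite /shiftm cmE fsfun_fun.
case: v => i [|j] /=.
  case: ifP => // /imfsetP [w _ /= [_]]; done.
case: ifP => [_ //|] H.
case: (finsuppP m (i, j)) => // Hin.
by move: H; rewrite (_ : (i, j.+1) = ((i, j).1, (i,j).2.+1)) // in_imfset.
Qed.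

Lemma shiftmM (m1 m2 : {cmonom var}) : shiftm (mmul m1 m2) = (mmul (shiftm m1) (shiftm m2)).
Proof. by apply/eqP/cmP => v; rewrite cmM !shiftmE; case: v => i [|j] //=; rewrite cmM. Qed.

Lemma shiftm1 : shiftm (mone : {cmonom var}) = mone.
Proof. by apply/eqP/cmP => v; rewrite shiftmE; case: v => i [|j] //=; rewrite !cm1. Qed.

Lemma shiftmU (i : 'I_n) j : shiftm (ucm ((i, j) : var)) = ucm ((i, j.+1) : var).
Proof.
apply/eqP/cmP => v; rewrite shiftmE; case: v => i' [|j'] /=; rewrite !cmU //.
by rewrite !xpair_eqE andbF.
Qed.

Definition sc (c : k) : dpoly := (sigma c)%:MP.
HB.instance Definition _ := GRing.RMorphism.copy sc (malgC \o sigma).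

Definition hs (m : {cmonom var}) : dpoly := << shiftm m >>.
Lemma hs_mm : mmorphism hs.
Proof.
split; last by rewrite /hs shiftm1.
by move=> x y; rewrite /hs shiftmM malgM_def fgmulUU mulr1.
Qed.
HB.instance Definition _ := isMultiplicative.Build _ _ hs hs_mm.

Lemma sigmaR_E : sR = mmap sc hs.
Proof. by []. Qed.

Lemma sigmaRM p q : sR (p * q) = sR p * sR q.
Proof. by rewrite sigmaR_E rmorphM. Qed.
Lemma sigmaRD p q : sR (p + q) = sR p + sR q.
Proof. by rewrite sigmaR_E rmorphD. Qed.
Lemma sigmaR0 : sR 0 = 0.
Proof. by rewrite sigmaR_E rmorph0. Qed.
Lemma sc1 : sc 1 = 1.
Proof. by rewrite /sc rmorph1 mpolyC1E. Qed.

Lemma sigmaRU m : sR << m >> = << shiftm m >>.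
Proof.
change (mmap sc hs << m >> = << shiftm m >>).
transitivity (sc 1 * hs m). exact: (mmapU (f:=sc) (h:=hs) 1 m).
rewrite sc1 mul1r. done.
Qed.

Lemma iter_yvar (i : 'I_n) j : iter j sR (yvar k i) = << ucm ((i, j) : var) >>.
Proof. elim: j => [|j IH]. exact: erefl. rewrite iterS IH. rewrite sigmaRU. rewrite shiftmU. rewrite /reverse_coercion. reflexivity. Qed.


Lemma iter_sRD t p q : iter t sR (p + q) = iter t sR p + iter t sR q.
Proof. elim: t => [|t IH]; first exact: erefl. by rewrite !iterS IH sigmaRD. Qed.
Lemma iter_sRM t p q : iter t sR (p * q) = iter t sR p * iter t sR q.
Proof. elim: t => [|t IH]; first exact: erefl. rewrite !iterS IH sigmaRM. reflexivity. Qed.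
Lemma iter_sR0 t : iter t sR 0 = 0.
Proof. elim: t => [|t IH]; first exact: erefl. by rewrite !iterS IH sigmaR0. Qed.

Section Ev.
Variable d : nvec n.
Definition Sd (v : var) : bool := (d v.1 != -1) && (`|d v.1|%N <= v.2)%N.
Definition chi (m : {cmonom var}) : k := (~~ has Sd (finsupp m))%:R.

Lemma has_fsetU (A B : {fset var}) : has Sd (A `|` B)%fset = has Sd A || has Sd B.
Proof.
apply/hasP/orP => [[v]|].
  by rewrite in_fsetU => /orP [vA|vB] Sv; [left|right]; apply/hasP; exists v.
by case=> /hasP [v vA Sv]; exists v; rewrite // in_fsetU ?vA ?vB ?orbT.
Qed.

Lemma has_fset1 v : has Sd [fset v]%fset = Sd v.
Proof.
apply/hasP/idP => [[w /fset1P -> //]|Sv]; by exists v; rewrite ?fset11.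
Qed.

Lemma has_fset0 : has Sd (fset0 : {fset var}) = false.
Proof. by apply/hasP => [[w]]; rewrite in_fset0. Qed.

Lemma chi_mm : mmorphism chi.
Proof.
split; last by rewrite /chi mdom1 has_fset0.
move=> x y; rewrite /chi mdomD has_fsetU.
by case: (has Sd _); case: (has Sd _); rewrite /= ?mul1r ?mul0r.
Qed.
HB.instance Definition _ := isMultiplicative.Build _ _ chi chi_mm.

Definition ev (p : dpoly) : k := mmap idfun chi p.

Lemma evM p q : ev (p * q) = ev p * ev q.
Proof. by rewrite /ev rmorphM. Qed.
Lemma evD p q : ev (p + q) = ev p + ev q.
Proof. by rewrite /ev rmorphD. Qed.
Lemma ev0 : ev 0 = 0.
Proof. by rewrite /ev rmorph0. Qed.
Lemma ev_prod (I : finType) (P : pred I) (F : I -> dpoly) :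
  ev (\prod_(i | P i) F i) = \prod_(i | P i) ev (F i).
Proof. by rewrite /ev rmorph_prod. Qed.

Lemma evU v : ev << ucm v >> = (~~ Sd v)%:R.
Proof.
transitivity (idfun 1 * chi (ucm v)); first exact: (mmapU (f:=idfun) (h:=chi) 1 (ucm v)).
by rewrite mul1r /chi mdomU has_fset1.
Qed.

Definition Jd (p : dpoly) : Prop := forall t, ev (iter t sR p) = 0.
End Ev.


Definition Fv (b : nvec n) (i : 'I_n) : dpoly := iter `|b i|%N sR (yvar k i).

Lemma ypowE (b : nvec n) : ypow sigma b = \prod_(i < n | (0 <= b i)%R) Fv b i.
Proof. exact: erefl. Qed.

Lemma ypow_eq (b b' : nvec n) : (forall i, b i = b' i) -> ypow sigma b = ypow sigma b'.
Proof.
move=> E; rewrite !ypowE.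
rewrite (eq_bigl (fun i => 0 <= b' i)); last by move=> i; rewrite E.
apply: eq_bigr => i _; rewrite /Fv E; reflexivity.
Qed.

Definition incr (c : nvec n) (i : 'I_n) : nvec n :=
  fun j => if j == i then c i + 1 else c j.

Section Ideal.
Variable I : dpoly -> Prop.
Hypothesis HI : is_sigma_ideal sigma I.
Hypothesis HIwm : is_well_mixed sigma I.

Lemma I_mull r x : I x -> I (r * x).
Proof. by case: HI => [[_ _ H] _]; apply: H. Qed.
Lemma I_mulr r x : I x -> I (x * r).
Proof. by move=> Hx; rewrite mulrC; apply: I_mull. Qed.

Lemma ypow_incr (c : nvec n) i : valid_vec c -> I (ypow sigma c) -> I (ypow sigma (incr c i)).
Proof.
move=> Vc Hc.
have Hii : incr c i i = c i + 1 by rewrite /incr eqxx.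
have Hj : forall j, j != i -> incr c i j = c j by move=> j /negPf; rewrite /incr => ->.
have Vi := Vc i.
rewrite ypowE (bigD1 i) /=; last by rewrite Hii; lia.
set rest := (X in _ * X).
have Erest : rest = \prod_(j < n | (0 <= c j) && (j != i)) Fv c j.
  rewrite /rest; apply: eq_big => j; first by case: eqVneq => [->|/Hj ->]; rewrite ?andbF.
  move/andP => [_ /Hj Ej]; rewrite /Fv Ej; reflexivity.
rewrite Erest.
have [ci0|ci0] := boolP (0 <= c i).
  rewrite ypowE (bigD1 i ci0) /= in Hc.
  have -> : Fv (incr c i) i = sR (Fv c i).
    rewrite /Fv Hii.
    have -> : absz (c i + 1) = (absz (c i)%R).+1 by lia.
    reflexivity.
  rewrite mulrC; apply: HIwm; rewrite mulrC; exact: Hc.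
apply: I_mull.
move: Hc; rewrite ypowE.
rewrite (eq_bigl (fun j => (0 <= c j) && (j != i))) //.
move=> j; case: eqVneq => [->|_]; rewrite ?andbT ?andbF //.
by apply/negbTE.
Qed.

Definition vmeas (b c : nvec n) : nat := \sum_(i < n) `|b i - c i|%N.

Lemma upward (b : nvec n) : forall N c, (vmeas b c <= N)%N -> valid_vec c -> vle c b ->
  I (ypow sigma c) -> I (ypow sigma b).
Proof.
elim=> [|N IH] c Hm Vc cb Ic.
  rewrite (ypow_eq (b' := c)) // => i.
  move: Hm; rewrite leqn0 /vmeas sum_nat_eq0 => /forallP /(_ i) /implyP /(_ isT) /eqP.
  have := cb i; lia.
have [/existsP [i ci]|] := boolP [exists i, c i < b i]; last first.
  move=> /existsPn H; rewrite (ypow_eq (b' := c)) // => j.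
  have := H j; have := cb j; lia.
apply: (IH (incr c i)).
- rewrite /vmeas (bigD1 i) //= in Hm; rewrite /vmeas (bigD1 i) //=.
  rewrite (eq_bigr (fun j => `|b j - c j|%N)); last first.
    by move=> j /negPf; rewrite /incr => ->.
  move: Hm; rewrite /incr eqxx.
  have := Vc i; lia.
- move=> j; rewrite /incr; case: (eqVneq j i) => [<-|_]; have := Vc j; try have := Vc i; lia.
- move=> j; rewrite /incr; have := cb j; case: (eqVneq j i) => [->|_]; lia.
- exact: ypow_incr.
Qed.

Lemma descent : forall N (b : nvec n), (\sum_(i < n) absz (b i + 1)%R <= N)%N -> valid_vec b ->
  I (ypow sigma b) -> exists c, is_char_vec sigma I c /\ vle c b.
Proof.
elim=> [|N IH] b Hm Vb Ib;
  (have [Hmin|Hnmin] := classic (forall c', valid_vec c' -> vle c' b -> I (ypow sigma c') -> c' = b);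
   [by exists b; split => //; move=> i; lia|]).
  exfalso; apply: Hnmin => c' Vc' cb _; apply: functional_extensionality => i.
  move: Hm; rewrite leqn0 sum_nat_eq0 => /forallP /(_ i) /implyP /(_ isT) /eqP.
  have := cb i; have := Vc' i; have := Vb i; lia.
have [c' [Vc' [cb [Ic' ne]]]] : exists c', valid_vec c' /\ vle c' b /\ I (ypow sigma c') /\ c' <> b.
  apply: NNPP => H; apply: Hnmin => c' V1 V2 V3; apply: NNPP => V4; apply: H.
  by exists c'.
have [i ci] : exists i, c' i < b i.
  apply: NNPP => H; apply: ne; apply: functional_extensionality => i.
  have := cb i; have : ~ (c' i < b i) by move=> h; apply: H; exists i.
  lia.
have Hlt : (\sum_(j < n) absz (c' j + 1)%R <= N)%N.
  rewrite -ltnS; apply: leq_trans Hm.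
  rewrite (bigD1 i) //= [X in (_ < X)%N](bigD1 i) //=.
  have : (\sum_(j < n | j != i) absz (c' j + 1)%R <= \sum_(j < n | j != i) absz (b j + 1)%R)%N.
    by apply: leq_sum => j _; have := cb j; have := Vc' j; lia.
  move=> H; rewrite -addSn; apply: leq_add H; have := Vc' i; lia.
have [c [Hc cc']] := IH c' Hlt Vc' Ic'.
by exists c; split => // j; have := cc' j; have := cb j; lia.
Qed.
End Ideal.


Lemma Jd_sigma_ideal d : is_sigma_ideal sigma (Jd d).
Proof.
split; [split|].
- by move=> t; rewrite iter_sR0 ev0.
- by move=> x y Hx Hy t; rewrite iter_sRD evD Hx Hy addr0.
- by move=> r x Hx t; rewrite iter_sRM evM Hx mulr0.
- by move=> x Hx t; rewrite -iterSr; apply: Hx.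
Qed.

Lemma Jd_gen (d : nvec n) i : d i != -1 -> Jd d (iter `|d i|%N sR (yvar k i)).
Proof.
move=> Hd t; rewrite -iterD iter_yvar evU /Sd /= Hd leq_addl.
exact: erefl.
Qed.

Lemma mideal_in (d : nvec n) i m r : d i != -1 ->
  mideal sigma d (r * iter m sR (iter `|d i|%N sR (yvar k i))).
Proof.
move=> Hd J [[J0 JD JM] Js] Hgen.
apply: JM; elim: m => [|m IH].
  by apply: Hgen; exists i.
by rewrite iterS; apply: Js.
Qed.

End S.

Theorem proposition7p2 (k : fieldType) (sigma : {rmorphism k -> k}) (n : nat)
  (Hchar : [pchar k] =i pred0)
  (I : dpoly k n -> Prop)
  (HI : is_sigma_ideal sigma I) (HIrad : is_radical I)
  (HIwm : is_well_mixed sigma I) (HImon : is_monomial_ideal I)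
  (a : nvec n) (Ha : valid_vec a)
  (Hac : forall c, is_char_vec sigma I c -> vle c a)
  (b : nvec n) (Hb : valid_vec b) (Hba : vle b a) :
  ~ I (ypow sigma b) <-> alexander_dual sigma I a (ypow sigma (vsub a b)).
Proof.
split.
- move=> Hnb c Hc.
  have ca := Hac c Hc.
  case: Hc => Vc Ic _.
  have [/existsP [i ci]|] := boolP [exists i, b i < c i]; last first.
    move=> /existsPn H; exfalso; apply: Hnb.
    apply: (upward HI HIwm (N := vmeas b c) (leqnn _) Vc) => // j.
    by have := H j; lia.
  have Hd : vbslash a c i != -1.
    rewrite /vbslash; have := Hb i; have := ca i.
    by case: ifP => ?; lia.
  rewrite ypowE (bigD1 i) /=; last by rewrite /vsub; have := Hba i; lia.
  rewrite mulrC /Fv.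
  have -> : `|vsub a b i|%N = (`|vsub a b i|%N - `|vbslash a c i|%N + `|vbslash a c i|%N)%N.
    rewrite subnK //; rewrite /vsub /vbslash; have := Hb i; have := ca i.
    by case: ifP => ?; lia.
  rewrite iterD; exact: mideal_in.
- move=> Hdual Hib.
  have [c [Hc cb]] := descent (leqnn _) Hb Hib.
  have ca := Hac c Hc.
  have := Hdual c Hc _ (Jd_sigma_ideal sigma (vbslash a c)).
  have Hgen : forall f : dpoly k n, (exists2 i, vbslash a c i != -1 & f = iter `|vbslash a c i|%N (@sigmaR k sigma n) (yvar k i)) -> Jd sigma (vbslash a c) f.
    by move=> f [i Hi ->]; apply: Jd_gen.
  move=> /(_ Hgen) /(_ 0%N) /=.
  rewrite ypowE ev_prod.
  rewrite big1; first by move/eqP; rewrite oner_eq0.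
  move=> i _; rewrite /Fv iter_yvar evU /Sd /=.
  suff -> : (vbslash a c i != -1) && (`|vbslash a c i| <= `|vsub a b i|)%N = false by [].
  rewrite /vbslash /vsub; have := cb i; have := ca i; have := Hb i; have := Hba i.
  by case: ifP => ?; lia.
Qed.
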